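(* Let $L$ be a finite lattice and $h:L\to\mathbb{R}$ be submodular, i.e. $h(x)+h(y)\ge h(x\uplus y)+h(x\cap y)$ for all $x,y\in L$. Suppose $h$ is increasing at $\cap$-irreducible elements, i.e. $h(a)\ge h(c)$ whenever $c$ is $\cap$-irreducible and $a\supseteq c$. Then $h$ is increasing: $a\supseteq c$ implies $h(a)\ge h(c)$ for all $a,c\in L$.
   Context: Lattices have order $\supseteq$, meet $\cap$, join $\uplus$. An element $c$ is $\cap$-irreducible if $c=x\cap y$ implies $c=x$ or $c=y$, and $c$ is not the top element. *)

(* Defs.v *)
From mathcomp Require Import all_boot all_order all_algebra.
Set Implicit Arguments. Unset Strict Implicit. Unset Printing Implicit Defensive.
Import Order.TTheory GRing.Theory Num.Theory.

(* The paper's lattice order "a ⊇ c" is the lattice order c <= a,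
   "∩" is the meet `&`, "⊎" is the join `|`. *)

Definition is_top (d : Order.disp_t) (L : latticeType d) (c : L) : Prop :=
  forall x : L, (x <= c)%O.

Definition meet_irreducible (d : Order.disp_t) (L : latticeType d) (c : L) : Prop :=
  (forall x y : L, c = (x `&` y)%O -> c = x \/ c = y) /\ ~ is_top c.

Local Open Scope ring_scope.

Definition submodular (d : Order.disp_t) (L : latticeType d) (R : numDomainType)
  (h : L -> R) : Prop :=
  forall x y : L, h (x `|` y)%O + h (x `&` y)%O <= h x + h y.

(* Main.v *)
Require Import Defs.
From mathcomp Require Import all_boot all_order all_algebra.
From Stdlib Require Import Classical.
Import Order.TTheory GRing.Theory Num.Theory.
Local Open Scope ring_scope.

Theorem lemma8 (d : Order.disp_t) (L : finLatticeType d) (R : realFieldType)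
  (h : L -> R) :
  submodular h ->
  (forall a c : L, meet_irreducible c -> (c <= a)%O -> h c <= h a) ->
  forall a c : L, (c <= a)%O -> h c <= h a.
Proof.
move=> hsub hirr.
suff H : forall n (c : L), (#|[set z : L | (c < z)%O]| <= n)%N ->
   forall a, (c <= a)%O -> h c <= h a.
  by move=> a c ca; apply: (H _ c (leqnn _)).
elim=> [|n IH] c hn a ca.
  have : c \in [set z : L | (c < z)%O] = false.
    by rewrite inE ltxx.
  have [->|cna] := eqVneq a c; first by rewrite lexx.
  have : a \in [set z : L | (c < z)%O] by rewrite inE lt_def cna ca.
  move: hn; rewrite leqn0 => /eqP/cards0_eq ->; by rewrite inE.
have IHc : forall x, (c < x)%O -> forall b, (x <= b)%O -> h x <= h b.
  move=> x cx; apply: IH; rewrite -ltnS; apply: (leq_trans _ hn).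
  apply: proper_card; apply/properP; split.
    apply/subsetP=> z; rewrite !inE => xz; exact: lt_trans cx xz.
  by exists x; rewrite !inE ?cx ?ltxx.
have [irr|nirr] := classic (meet_irreducible c); first exact: hirr.
have [ntop|top] := classic (~ is_top c); last first.
  have tc : is_top c by apply: NNPP.
  have -> : a = c by apply/eqP; rewrite eq_le ca tc.
  by rewrite lexx.
have [x [y [cxy [cnx cny]]]] : exists x y : L, c = (x `&` y)%O /\ c <> x /\ c <> y.
  apply: NNPP => nex; apply: nirr; split=> // x y cxy.
  apply: NNPP => hn'; apply: nex; exists x, y; split=> //.
  by split=> E; apply: hn'; [left|right].
have cx : (c < x)%O by rewrite lt_neqAle; apply/andP; split;
  [apply/eqP| rewrite cxy leIl].
have cy : (c < y)%O by rewrite lt_neqAle; apply/andP; split;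
  [apply/eqP| rewrite cxy leIr].
have s1 : h (a `&` x)%O <= h a.
  have := hsub a x; have := IHc x cx (a `|` x)%O (leUr _ _).
  move=> H1 H2; rewrite -(lerD2r (h x)); apply: le_trans H2.
  by rewrite addrC lerD2r.
have s2 : h (a `&` x `&` y)%O <= h (a `&` x)%O.
  have := hsub (a `&` x)%O y; have := IHc y cy (a `&` x `|` y)%O (leUr _ _).
  move=> H1 H2; rewrite -(lerD2r (h y)); apply: le_trans H2.
  by rewrite addrC lerD2r.
have E : (a `&` x `&` y)%O = c.
  by rewrite -meetA -cxy; apply/meet_idPr.
by rewrite -E; apply: le_trans s2 s1.
Qed.
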